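(* Let $H$ be the Hamiltonian defined on the interval $[0,1]$ a.e. by \[ H(t):= \begin{cases} \begin{pmatrix}1&0\\0&0\end{pmatrix} & \text{if } e^{-(2n+1)} < t \le e^{-2n}, \\[1.5ex] \begin{pmatrix}0&0\\0&1\end{pmatrix} & \text{if } e^{-(2n+2)} < t \le e^{-(2n+1)} \end{cases} \qquad\text{for }n\in\mathbb{N}_0. \] Let $\kappa_H(r)$ and $K_H(t;r)$ be defined as below with $c=1$. Then \[ \kappa_H(r) \asymp \log r, \qquad \int_0^1 K_H(t;r)\,\mathrm{d}t \asymp (\log r)^2, \] for $r>r_0=\frac{1}{\sqrt{\det\Omega(0,1)}}$.
   Context: Write $H=\begin{pmatrix}h_1&h_3\\ h_3&h_2\end{pmatrix}$, $\Omega(s,t)=\int_s^tH(u)\,\mathrm{d}u$, $\omega_j(s,t)=\int_s^th_j$. With $c=1$: $(\hat t,\hat s)$ is the unique pair with $\det\Omega(0,\hat t(r))=\frac{1}{r^2}$ for $r>r_0$ and $\hat s(t;r)\le t$, $\det\Omega(\hat s(t;r),t)=\frac{1}{r^2}$ for $t\ge\hat t(r)$; $K_H(t;r):=\mathbf{1}_{[0,\hat t(r))}(t)\frac{\omega_2(0,t)h_1(t)}{\frac{1}{r^2}+(\omega_3(0,t))^2}+\mathbf{1}_{[\hat t(r),1)}(t)\frac{h_1(t)}{\omega_1(\hat s(t;r),t)}$. $\kappa_H(r)$ is produced by the algorithm: $\sigma_0^{(r)}:=0$; if $\det\Omega(\sigma_{j-1}^{(r)},1)>\frac{1}{r^2}$,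 let $\sigma_j^{(r)}\in(\sigma_{j-1}^{(r)},1)$ be the unique point with $\det\Omega(\sigma_{j-1}^{(r)},\sigma_j^{(r)})=\frac{1}{r^2}$; otherwise set $\sigma_j^{(r)}:=1$, $\kappa_H(r):=j$ and stop. $f\asymp g$ means $c_1g\le f\le c_2g$ for constants $c_1,c_2>0$ (here for sufficiently large $r$). *)

(* Defs.v *)
From Stdlib Require Import Reals Lra ClassicalEpsilon.
From Coquelicot Require Import Coquelicot.
Open Scope R_scope.

(* A 2x2 Hamiltonian H = [[h1, h3], [h3, h2]] given by its three entries. *)
Record Ham := MkHam { h1 : R -> R ; h2 : R -> R ; h3 : R -> R }.

Definition omega (h : R -> R) (s t : R) : R := RInt h s t.

Definition detOmega (H : Ham) (s t : R) : R :=
  omega (h1 H) s t * omega (h2 H) s t - (omega (h3 H) s t) ^ 2.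

Definition r0 (H : Ham) : R := 1 / sqrt (detOmega H 0 1).

Definition the_R (P : R -> Prop) : R := epsilon (inhabits 0) P.
Definition the_nat (P : nat -> Prop) : nat := epsilon (inhabits 0%nat) P.

Definition ind (P : R -> Prop) (t : R) : R :=
  if excluded_middle_informative (P t) then 1 else 0.

Definition t_hat (H : Ham) (r : R) : R :=
  the_R (fun t => 0 <= t <= 1 /\ detOmega H 0 t = 1 / r ^ 2).

Definition s_hat (H : Ham) (r t : R) : R :=
  the_R (fun s => 0 <= s <= t /\ detOmega H s t = 1 / r ^ 2).

(* K_H(t;r) with c = 1 *)
Definition K_H (H : Ham) (r t : R) : R :=
  ind (fun u => 0 <= u < t_hat H r) t *
    (omega (h2 H) 0 t * h1 H t / (1 / r ^ 2 + (omega (h3 H) 0 t) ^ 2))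
  + ind (fun u => t_hat H r <= u < 1) t *
    (h1 H t / omega (h1 H) (s_hat H r t) t).

Fixpoint sigma (H : Ham) (r : R) (j : nat) : R :=
  match j with
  | O => 0
  | S j' =>
      let p := sigma H r j' in
      if Rlt_dec (1 / r ^ 2) (detOmega H p 1)
      then the_R (fun s => p < s < 1 /\ detOmega H p s = 1 / r ^ 2)
      else 1
  end.

Definition kappa_spec (H : Ham) (r : R) (k : nat) : Prop :=
  (1 <= k)%nat /\
  ~ (1 / r ^ 2 < detOmega H (sigma H r (k - 1)) 1) /\
  (forall i : nat, (i < k - 1)%nat -> 1 / r ^ 2 < detOmega H (sigma H r i) 1).

Definition kappa_H (H : Ham) (r : R) : nat := the_nat (kappa_spec H r).

Definition hex1 (t : R) : R :=
  if excluded_middle_informative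
       (exists n : nat, exp (- (2 * INR n + 1)) < t <= exp (- (2 * INR n)))
  then 1 else 0.

Definition hex2 (t : R) : R :=
  if excluded_middle_informative
       (exists n : nat, exp (- (2 * INR n + 2)) < t <= exp (- (2 * INR n + 1)))
  then 1 else 0.

Definition Hex : Ham := MkHam hex1 hex2 (fun _ => 0).

(* Main.v *)
Require Import Defs.
From Stdlib Require Import Reals Lra Lia Psatz ClassicalEpsilon ZArith Classical.
From Coquelicot Require Import Coquelicot.
Open Scope R_scope.


Definition SF_integrable {a b : R} (phi : StepFun a b) : Riemann_integrable phi a b.
Proof.
  intro eps. exists phi. exists (mkStepFun (StepFun_P4 a b 0)).
  split.
  - intros t _. simpl. unfold fct_cte. rewrite Rminus_diag, Rabs_R0. lra.
  - rewrite StepFun_P18. rewrite Rmult_0_l, Rabs_R0. apply cond_pos.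
Defined.

Lemma SF_RiemannInt {a b : R} (phi : StepFun a b) :
  RiemannInt (SF_integrable phi) = RiemannInt_SF phi.
Proof.
  unfold RiemannInt. destruct (RiemannInt_exists _ _ _) as [l Hl].
  apply UL_sequence with (fun _ : nat => RiemannInt_SF phi); [exact Hl|].
  intros eps Heps. exists 0%nat. intros n _. unfold R_dist.
  rewrite Rminus_diag, Rabs_R0. lra.
Qed.

Lemma squeeze (f : R -> R) (a b : R) : a <= b ->
  (forall eps, 0 < eps -> exists g h : R -> R, ex_RInt g a b /\ ex_RInt h a b /\
     (forall x, a <= x <= b -> Rabs (f x - g x) <= h x) /\ RInt h a b < eps) ->
  ex_RInt f a b.
Proof.
  intros Hab H. apply ex_RInt_Reals_1. intro eps.
  assert (He4 : 0 < eps / 4) by (destruct eps; simpl; lra).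
  destruct (constructive_indefinite_description _ (H _ He4)) as [g Hg'].
  destruct (constructive_indefinite_description _ Hg') as [h [Hg [Hh [Hfgh Hint]]]].
  pose (prg := ex_RInt_Reals_0 _ _ _ Hg).
  pose (prh := ex_RInt_Reals_0 _ _ _ Hh).
  destruct (prg (mkposreal _ He4)) as [phig [psig [Hg1 Hg2]]].
  destruct (prh (mkposreal _ He4)) as [phih [psih [Hh1 Hh2]]].
  simpl in Hg2, Hh2.
  rewrite Rmin_left in Hg1, Hh1 by lra. rewrite Rmax_right in Hg1, Hh1 by lra.
  exists phig.
  exists (mkStepFun (StepFun_P28 1 psig (mkStepFun (StepFun_P28 1 phih psih)))).
  split.
  - intros t Ht. rewrite Rmin_left in Ht by lra. rewrite Rmax_right in Ht by lra.
    simpl. specialize (Hg1 t Ht). specialize (Hh1 t Ht). specialize (Hfgh t Ht).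
    apply Rabs_le_between in Hh1.
    replace (f t - phig t) with ((f t - g t) + (g t - phig t)) by ring.
    eapply Rle_trans; [apply Rabs_triang|]. lra.
  - rewrite StepFun_P30. simpl. rewrite StepFun_P30.
    assert (Hphi : RiemannInt_SF phih <= RInt h a b + RiemannInt_SF psih).
    { rewrite <- (SF_RiemannInt phih), <- (SF_RiemannInt psih).
      rewrite (RInt_Reals h a b prh).
      pose (pr3 := RiemannInt_P10 1 prh (SF_integrable psih)).
      apply Rle_trans with (RiemannInt pr3); [|rewrite (RiemannInt_P13 prh (SF_integrable psih) pr3); lra].
      apply RiemannInt_P19; [exact Hab|].
      intros x Hx. assert (Hx' : Rmin a b <= x <= Rmax a b).
      { rewrite Rmin_left by lra; rewrite Rmax_right by lra; lra. }
      specialize (Hh1 x ltac:(lra)). apply Rabs_le_between in Hh1. lra. }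
    assert (Hpos : 0 <= RiemannInt_SF
       (mkStepFun (StepFun_P28 1 psig (mkStepFun (StepFun_P28 1 phih psih))))).
    { apply Rle_trans with (RiemannInt_SF (mkStepFun (StepFun_P4 a b 0))).
      { rewrite StepFun_P18; lra. }
      apply StepFun_P37; [exact Hab|].
      intros x Hx. simpl. unfold fct_cte.
      specialize (Hg1 x ltac:(lra)). specialize (Hh1 x ltac:(lra)).
      specialize (Hfgh x ltac:(lra)).
      pose proof (Rabs_pos (f x - g x)). pose proof (Rabs_pos (g x - phig x)).
      apply Rabs_le_between in Hh1. lra. }
    rewrite StepFun_P30 in Hpos. simpl in Hpos. rewrite StepFun_P30 in Hpos.
    rewrite Rabs_pos_eq by lra.
    apply Rabs_lt_between in Hg2. apply Rabs_lt_between in Hh2.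
    destruct eps; simpl in *. lra.
Qed.

Lemma RInt_const_R (a b c : R) : RInt (fun _ => c) a b = c * (b - a).
Proof. rewrite RInt_const. unfold scal; simpl; unfold mult; simpl. ring. Qed.

Lemma ex_RInt_const_ext (f : R -> R) (a b c : R) :
  (forall x, Rmin a b < x < Rmax a b -> f x = c) -> ex_RInt f a b.
Proof.
  intros H. apply ex_RInt_ext with (fun _ => c).
  - intros x Hx. symmetry. apply H. exact Hx.
  - apply ex_RInt_const.
Qed.

Lemma RInt_const_ext (f : R -> R) (a b c : R) :
  (forall x, Rmin a b < x < Rmax a b -> f x = c) -> RInt f a b = c * (b - a).
Proof.
  intros H. rewrite <- RInt_const_R. apply RInt_ext. exact H.
Qed.

Lemma RInt_Chasles_R (f : R -> R) (a b c : R) :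
  ex_RInt f a b -> ex_RInt f b c -> RInt f a b + RInt f b c = RInt f a c.
Proof. intros. apply (RInt_Chasles f a b c); auto. Qed.

Lemma mono_approx (n : nat) : forall (f : R -> R) (a b : R), a <= b ->
  (forall x y, a <= x -> x <= y -> y <= b -> f x <= f y) ->
  exists g h : R -> R, ex_RInt g a b /\ ex_RInt h a b /\
     (forall x, a <= x <= b -> Rabs (f x - g x) <= h x) /\
     RInt h a b <= (b - a) * (f b - f a) / 2 ^ n.
Proof.
  induction n as [|n IH]; intros f a b Hab Hf.
  - exists (fun _ => f a), (fun _ => f b - f a).
    split; [apply ex_RInt_const|]. split; [apply ex_RInt_const|]. split.
    + intros x Hx. pose proof (Hf a x ltac:(lra) ltac:(lra) ltac:(lra)).
      pose proof (Hf x b ltac:(lra) ltac:(lra) ltac:(lra)).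
      rewrite Rabs_pos_eq; lra.
    + rewrite RInt_const_R. simpl. lra.
  - set (c := (a + b) / 2).
    destruct (IH f a c ltac:(unfold c; lra)) as [g1 [h1 [Hg1 [Hh1 [B1 I1]]]]].
    { intros x y ? ? ?. apply Hf; unfold c in *; lra. }
    destruct (IH f c b ltac:(unfold c; lra)) as [g2 [h2 [Hg2 [Hh2 [B2 I2]]]]].
    { intros x y ? ? ?. apply Hf; unfold c in *; lra. }
    exists (fun x => if Rle_dec x c then g1 x else g2 x).
    exists (fun x => if Rle_dec x c then h1 x else h2 x).
    assert (Eg1 : forall k : R -> R, ex_RInt k a c ->
      ex_RInt (fun x => if Rle_dec x c then k x else g2 x) a c).
    { intros k Hk. apply ex_RInt_ext with k; auto.
      intros x Hx. rewrite Rmin_left in Hx by (unfold c; lra).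
      rewrite Rmax_right in Hx by (unfold c; lra).
      destruct (Rle_dec x c); [reflexivity|lra]. }
    split; [|split; [|split]].
    + apply ex_RInt_Chasles with c.
      * apply ex_RInt_ext with g1; auto.
        intros x Hx. rewrite Rmin_left in Hx by (unfold c; lra).
        rewrite Rmax_right in Hx by (unfold c; lra).
        destruct (Rle_dec x c); [reflexivity|lra].
      * apply ex_RInt_ext with g2; auto.
        intros x Hx. rewrite Rmin_left in Hx by (unfold c; lra).
        rewrite Rmax_right in Hx by (unfold c; lra).
        destruct (Rle_dec x c); [lra|reflexivity].
    + apply ex_RInt_Chasles with c.
      * apply ex_RInt_ext with h1; auto.
        intros x Hx. rewrite Rmin_left in Hx by (unfold c; lra).
        rewrite Rmax_right in Hx by (unfold c; lra).
        destruct (Rle_dec x c); [reflexivity|lra].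
      * apply ex_RInt_ext with h2; auto.
        intros x Hx. rewrite Rmin_left in Hx by (unfold c; lra).
        rewrite Rmax_right in Hx by (unfold c; lra).
        destruct (Rle_dec x c); [lra|reflexivity].
    + intros x Hx. destruct (Rle_dec x c).
      * apply B1; lra.
      * apply B2; lra.
    + rewrite <- (RInt_Chasles_R _ a c b).
      * rewrite (RInt_ext _ h1 a c), (RInt_ext _ h2 c b).
        -- pose proof (Hf a c ltac:(lra) ltac:(unfold c; lra) ltac:(unfold c; lra)).
           pose proof (Hf c b ltac:(unfold c; lra) ltac:(unfold c; lra) ltac:(lra)).
           simpl. unfold c in *.
           assert (0 < 2 ^ n) by (apply pow_lt; lra).
           apply Rle_trans with ((c - a) * (f c - f a) / 2 ^ n + (b - c) * (f b - f c) / 2 ^ n).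
           { unfold c; lra. }
           unfold c. right. field. lra.
        -- intros x Hx. rewrite Rmin_left in Hx by (unfold c; lra).
           rewrite Rmax_right in Hx by (unfold c; lra).
           destruct (Rle_dec x c); [lra|reflexivity].
        -- intros x Hx. rewrite Rmin_left in Hx by (unfold c; lra).
           rewrite Rmax_right in Hx by (unfold c; lra).
           destruct (Rle_dec x c); [reflexivity|lra].
      * apply ex_RInt_ext with h1; auto.
        intros x Hx. rewrite Rmin_left in Hx by (unfold c; lra).
        rewrite Rmax_right in Hx by (unfold c; lra).
        destruct (Rle_dec x c); [reflexivity|lra].
      * apply ex_RInt_ext with h2; auto.
        intros x Hx. rewrite Rmin_left in Hx by (unfold c; lra).
        rewrite Rmax_right in Hx by (unfold c; lra).
        destruct (Rle_dec x c); [lra|reflexivity].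
Qed.

Lemma pow2_ge_n (n : nat) : INR n <= 2 ^ n.
Proof.
  induction n as [|n IH]; [simpl; lra|]. rewrite S_INR. simpl.
  assert (1 <= 2 ^ n) by (apply pow_R1_Rle; lra). lra.
Qed.

Lemma mono_inc_RInt (f : R -> R) (a b : R) : a <= b ->
  (forall x y, a <= x -> x <= y -> y <= b -> f x <= f y) -> ex_RInt f a b.
Proof.
  intros Hab Hf. apply squeeze; [exact Hab|]. intros eps Heps.
  set (K := (b - a) * (f b - f a)).
  assert (HK : 0 <= K).
  { unfold K. apply Rmult_le_pos; [lra|]. pose proof (Hf a b ltac:(lra) Hab ltac:(lra)). lra. }
  destruct (archimed (K / eps)) as [Hup _].
  set (n := Z.to_nat (up (K / eps))).
  assert (Hn : K / eps < INR n).
  { unfold n. assert (0 <= K / eps) by (apply Rdiv_le_0_compat; lra).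
    assert (0 <= up (K/eps))%Z. { apply le_IZR. lra. }
    rewrite INR_IZR_INZ, Z2Nat.id by lia. exact Hup. }
  destruct (mono_approx n f a b Hab Hf) as [g [h [Hg [Hh [B I]]]]].
  exists g, h. repeat split; auto.
  eapply Rle_lt_trans; [exact I|]. fold K.
  pose proof (pow2_ge_n n). assert (0 < 2 ^ n) by (apply pow_lt; lra).
  apply Rmult_lt_reg_r with (2 ^ n); [lra|]. unfold Rdiv. rewrite Rmult_assoc, Rinv_l by lra.
  rewrite Rmult_1_r.
  apply Rmult_lt_compat_l with (r := eps) in Hn; [|lra].
  replace (eps * (K / eps)) with K in Hn by (field; lra). nra.
Qed.

Lemma mono_dec_RInt (f : R -> R) (a b : R) : a <= b ->
  (forall x y, a <= x -> x <= y -> y <= b -> f y <= f x) -> ex_RInt f a b.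
Proof.
  intros Hab Hf.
  assert (H : ex_RInt (fun x => - f x) a b).
  { apply mono_inc_RInt; auto. intros x y ? ? ?. specialize (Hf x y). lra. }
  apply ex_RInt_ext with (fun x => opp (- f x)).
  - intros x _. unfold opp; simpl. ring.
  - exact (ex_RInt_opp (fun x => - f x) a b H).
Qed.

Lemma near_left (f : R -> R) (a b M : R) : a < b ->
  (forall x, a <= x <= b -> Rabs (f x) <= M) ->
  (forall c, a < c <= b -> ex_RInt f c b) -> ex_RInt f a b.
Proof.
  intros Hab HM Hc. apply squeeze; [lra|]. intros eps Heps.
  set (M' := Rabs M + 1).
  assert (HM' : 0 < M') by (unfold M'; pose proof (Rabs_pos M); lra).
  set (c := a + Rmin (b - a) (eps / (2 * M'))).
  assert (Hmin1 : Rmin (b - a) (eps / (2 * M')) <= b - a) by apply Rmin_l.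
  assert (Hmin2 : Rmin (b - a) (eps / (2 * M')) <= eps / (2 * M')) by apply Rmin_r.
  assert (Hmin3 : 0 < Rmin (b - a) (eps / (2 * M'))).
  { apply Rmin_glb_lt; [lra|]. apply Rdiv_lt_0_compat; lra. }
  assert (Hac : a < c) by (unfold c; lra).
  assert (Hcb : c <= b) by (unfold c; lra).
  exists (fun x => if Rlt_dec x c then 0 else f x).
  exists (fun x => if Rlt_dec x c then M' else 0).
  split; [|split; [|split]].
  - apply ex_RInt_Chasles with c.
    + apply ex_RInt_const_ext with 0. intros x Hx.
      rewrite Rmin_left in Hx by lra. rewrite Rmax_right in Hx by lra.
      destruct (Rlt_dec x c); [reflexivity|lra].
    + apply ex_RInt_ext with f; [|apply Hc; lra].
      intros x Hx. rewrite Rmin_left in Hx by lra. rewrite Rmax_right in Hx by lra.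
      destruct (Rlt_dec x c); [lra|reflexivity].
  - apply ex_RInt_Chasles with c.
    + apply ex_RInt_const_ext with M'. intros x Hx.
      rewrite Rmin_left in Hx by lra. rewrite Rmax_right in Hx by lra.
      destruct (Rlt_dec x c); [reflexivity|lra].
    + apply ex_RInt_const_ext with 0.
      intros x Hx. rewrite Rmin_left in Hx by lra. rewrite Rmax_right in Hx by lra.
      destruct (Rlt_dec x c); [lra|reflexivity].
  - intros x Hx. destruct (Rlt_dec x c).
    + rewrite Rminus_0_r. specialize (HM x Hx). unfold M'.
      pose proof (Rle_abs M). lra.
    + rewrite Rminus_diag, Rabs_R0. lra.
  - rewrite <- (RInt_Chasles_R _ a c b).
    + rewrite (RInt_const_ext _ a c M'), (RInt_const_ext _ c b 0).
      * assert (M' * (c - a) <= M' * (eps / (2 * M'))).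
        { apply Rmult_le_compat_l; unfold c; lra. }
        replace (M' * (eps / (2 * M'))) with (eps / 2) in H by (field; lra). lra.
      * intros x Hx. rewrite Rmin_left in Hx by lra. rewrite Rmax_right in Hx by lra.
        destruct (Rlt_dec x c); [lra|reflexivity].
      * intros x Hx. rewrite Rmin_left in Hx by lra. rewrite Rmax_right in Hx by lra.
        destruct (Rlt_dec x c); [reflexivity|lra].
    + apply ex_RInt_const_ext with M'. intros x Hx.
      rewrite Rmin_left in Hx by lra. rewrite Rmax_right in Hx by lra.
      destruct (Rlt_dec x c); [reflexivity|lra].
    + apply ex_RInt_const_ext with 0.
      intros x Hx. rewrite Rmin_left in Hx by lra. rewrite Rmax_right in Hx by lra.
      destruct (Rlt_dec x c); [lra|reflexivity].
Qed.

Lemma ex_RInt_sub (f : R -> R) (a b c d : R) :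
  a <= c -> c <= d -> d <= b -> ex_RInt f a b -> ex_RInt f c d.
Proof.
  intros H1 H2 H3 H.
  apply (ex_RInt_Chasles_1 (V:=R_CompleteNormedModule) f c d b); [lra|].
  apply (ex_RInt_Chasles_2 (V:=R_CompleteNormedModule) f a c b); [lra|exact H].
Qed.


Definition pp (n : nat) : R := exp (- INR n).
Definition inI (n : nat) (t : R) : Prop := pp (S n) < t <= pp n.
Definition e1 (n : nat) : R := if Nat.even n then 1 else 0.

Lemma exp1_gt2 : 2 < exp 1.
Proof. pose proof (exp_ineq1 1 ltac:(lra)). lra. Qed.

Lemma pp_pos n : 0 < pp n.
Proof. apply exp_pos. Qed.

Lemma pp_0 : pp 0 = 1.
Proof. unfold pp. simpl. rewrite Ropp_0. apply exp_0. Qed.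

Lemma pp_plus a b : pp (a + b) = pp a * pp b.
Proof. unfold pp. rewrite plus_INR, <- exp_plus. f_equal. ring. Qed.

Lemma pp_S n : pp (S n) = pp n * / exp 1.
Proof. unfold pp. rewrite S_INR, Ropp_plus_distr, exp_plus, !exp_Ropp. reflexivity. Qed.

Lemma q_bounds : 0 < / exp 1 < 1/2.
Proof.
  pose proof exp1_gt2. split; [apply Rinv_0_lt_compat; lra|].
  apply Rmult_lt_reg_r with (exp 1); [lra|]. rewrite Rinv_l by lra. lra.
Qed.

Lemma pp_lt n : pp (S n) < pp n.
Proof. rewrite pp_S. pose proof (pp_pos n). pose proof q_bounds. nra. Qed.

Lemma ell_ge n : pp (S n) <= pp n - pp (S n).
Proof. rewrite pp_S. pose proof (pp_pos n). pose proof q_bounds. nra. Qed.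

Lemma pp_mono m n : (m <= n)%nat -> pp n <= pp m.
Proof.
  intros H. unfold pp. destruct (Nat.eq_dec m n) as [->|Hne]; [lra|].
  left. apply exp_increasing. apply Ropp_lt_contravar. apply lt_INR. lia.
Qed.

Lemma pp_le1 n : pp n <= 1.
Proof. rewrite <- pp_0. apply pp_mono. lia. Qed.

Lemma pp_lt_inv m n : pp n < pp m -> (m < n)%nat.
Proof.
  intros H. destruct (le_lt_dec n m) as [Hle|Hlt]; auto.
  apply pp_mono in Hle. lra.
Qed.

Lemma inI_unique n m t : inI n t -> inI m t -> n = m.
Proof.
  unfold inI. intros [H1 H2] [H3 H4].
  assert (pp (S n) < pp m) by lra. assert (pp (S m) < pp n) by lra.
  apply pp_lt_inv in H. apply pp_lt_inv in H0. lia.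
Qed.

Lemma inI_order a b s t : inI a s -> inI b t -> s <= t -> (b <= a)%nat.
Proof.
  unfold inI. intros [H1 H2] [H3 H4] Hst.
  assert (pp (S a) < pp b) by lra. apply pp_lt_inv in H. lia.
Qed.

Lemma inI_range n t : inI n t -> 0 < t <= 1.
Proof. unfold inI. intros [H1 H2]. pose proof (pp_pos (S n)). pose proof (pp_le1 n). lra. Qed.

Lemma nat_floor (x : R) : 0 <= x -> exists n : nat, INR n <= x < INR n + 1.
Proof.
  intros Hx. destruct (base_Int_part x) as [H1 H2].
  assert (0 <= Int_part x)%Z.
  { assert (Hm : IZR (-1) < IZR (Int_part x)) by lra.
    apply lt_IZR in Hm. lia. }
  exists (Z.to_nat (Int_part x)). rewrite INR_IZR_INZ, Z2Nat.id by lia. lra.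
Qed.

Lemma inI_ex t : 0 < t <= 1 -> exists n, inI n t.
Proof.
  intros [H0 H1]. assert (0 <= - ln t).
  { assert (ln t <= 0). { rewrite <- ln_1. apply ln_le; lra. } lra. }
  destruct (nat_floor _ H) as [n [Hn1 Hn2]]. exists n. unfold inI, pp.
  rewrite S_INR. split.
  - rewrite <- (exp_ln t) by lra. apply exp_increasing. lra.
  - rewrite <- (exp_ln t) at 1 by lra.
    destruct (Rle_lt_or_eq_dec _ _ Hn1) as [Hlt|Heq].
    + left. apply exp_increasing. lra.
    + right. f_equal. lra.
Qed.

Lemma even_2k k : Nat.even (2 * k) = true.
Proof. apply Nat.even_spec. exists k. reflexivity. Qed.
Lemma odd_2k1 k : Nat.even (2 * k + 1) = false.
Proof.
  destruct (Nat.even (2*k+1)) eqn:E; auto. apply Nat.even_spec in E.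
  destruct E as [j Hj]. lia.
Qed.

Lemma inI_2k k t : inI (2 * k) t <->
  exp (- (2 * INR k + 1)) < t <= exp (- (2 * INR k)).
Proof.
  unfold inI, pp. rewrite S_INR, mult_INR.
  replace (INR 2 * INR k) with (2 * INR k) by (simpl; ring). reflexivity.
Qed.

Lemma inI_2k1 k t : inI (2 * k + 1) t <->
  exp (- (2 * INR k + 2)) < t <= exp (- (2 * INR k + 1)).
Proof.
  unfold inI, pp. rewrite S_INR, plus_INR, mult_INR.
  replace (INR 2 * INR k + INR 1 + 1) with (2 * INR k + 2) by (simpl; ring).
  replace (INR 2 * INR k + INR 1) with (2 * INR k + 1) by (simpl; ring). reflexivity.
Qed.

Lemma hex1_block n t : inI n t -> hex1 t = e1 n.
Proof.
  intros H. unfold hex1, e1.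
  destruct (excluded_middle_informative _) as [[k Hk]|Hn].
  - apply inI_2k in Hk. rewrite (inI_unique _ _ _ H Hk). rewrite even_2k. reflexivity.
  - destruct (Nat.even n) eqn:E; auto. exfalso. apply Nat.even_spec in E.
    destruct E as [k ->]. apply Hn. exists k. apply inI_2k. exact H.
Qed.

Lemma hex2_block n t : inI n t -> hex2 t = 1 - e1 n.
Proof.
  intros H. unfold hex2, e1.
  destruct (excluded_middle_informative _) as [[k Hk]|Hn].
  - apply inI_2k1 in Hk. rewrite (inI_unique _ _ _ H Hk). rewrite odd_2k1. ring.
  - destruct (Nat.even n) eqn:E; [ring|]. exfalso.
    destruct (Nat.Even_or_Odd n) as [Hev|[k Hk]].
    + apply Nat.even_spec in Hev. congruence.
    + subst. apply Hn. exists k. apply inI_2k1. exact H.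
Qed.

Lemma hex_out t : t <= 0 \/ 1 < t -> hex1 t = 0 /\ hex2 t = 0.
Proof.
  intros Ht. unfold hex1, hex2. split.
  - destruct (excluded_middle_informative _) as [[k Hk]|Hn]; auto.
    apply inI_2k in Hk. apply inI_range in Hk. lra.
  - destruct (excluded_middle_informative _) as [[k Hk]|Hn]; auto.
    apply inI_2k1 in Hk. apply inI_range in Hk. lra.
Qed.

Lemma hex1_bounds t : 0 <= hex1 t <= 1.
Proof. unfold hex1. destruct (excluded_middle_informative _); lra. Qed.
Lemma hex2_bounds t : 0 <= hex2 t <= 1.
Proof. unfold hex2. destruct (excluded_middle_informative _); lra. Qed.

Lemma e1_bounds n : e1 n = 0 \/ e1 n = 1.
Proof. unfold e1. destruct (Nat.even n); auto. Qed.

Lemma e1_S n : e1 (S n) = 1 - e1 n.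
Proof.
  unfold e1. rewrite Nat.even_succ, <- Nat.negb_even.
  destruct (Nat.even n); simpl; ring.
Qed.


Lemma blockwise (f : R -> R) (M : R) :
  (forall x, 0 <= x <= 1 -> Rabs (f x) <= M) ->
  (forall n a b, pp (S n) <= a -> a <= b -> b <= pp n -> ex_RInt f a b) ->
  ex_RInt f 0 1.
Proof.
  intros HM Hb. apply near_left with M; [lra|exact HM|].
  assert (Hn : forall n, ex_RInt f (pp n) 1).
  { induction n as [|n IH].
    - rewrite pp_0. apply ex_RInt_point.
    - apply ex_RInt_Chasles with (pp n); auto.
      apply Hb with n; pose proof (pp_lt n); lra. }
  intros c Hc. destruct (inI_ex c Hc) as [n [H1 H2]].
  apply ex_RInt_Chasles with (pp n); auto.
  apply Hb with n; lra.
Qed.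

Definition Fh (h : R -> R) (t : R) : R := RInt h 0 t.
Definition F1 := Fh hex1.
Definition F2 := Fh hex2.

Lemma hex1_blockint n a b : pp (S n) <= a -> a <= b -> b <= pp n -> ex_RInt hex1 a b.
Proof.
  intros. apply ex_RInt_const_ext with (e1 n). intros x Hx.
  rewrite Rmin_left in Hx by lra. rewrite Rmax_right in Hx by lra.
  apply hex1_block. unfold inI; lra.
Qed.
Lemma hex2_blockint n a b : pp (S n) <= a -> a <= b -> b <= pp n -> ex_RInt hex2 a b.
Proof.
  intros. apply ex_RInt_const_ext with (1 - e1 n). intros x Hx.
  rewrite Rmin_left in Hx by lra. rewrite Rmax_right in Hx by lra.
  apply hex2_block. unfold inI; lra.
Qed.

Lemma ex_all (h : R -> R) : (forall t, t <= 0 \/ 1 < t -> h t = 0) -> ex_RInt h 0 1 ->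
  forall s t, ex_RInt h s t.
Proof.
  intros Hout H01.
  assert (H0 : forall x, ex_RInt h 0 x).
  { intros x. destruct (Rle_dec x 0) as [Hx|Hx].
    - apply ex_RInt_swap. apply ex_RInt_const_ext with 0. intros y Hy.
      rewrite Rmin_left in Hy by lra. rewrite Rmax_right in Hy by lra.
      apply Hout. lra.
    - destruct (Rle_dec x 1) as [Hx1|Hx1].
      + apply ex_RInt_sub with 0 1; auto; lra.
      + apply ex_RInt_Chasles with 1; auto. apply ex_RInt_const_ext with 0. intros y Hy.
        rewrite Rmin_left in Hy by lra. rewrite Rmax_right in Hy by lra.
        apply Hout. lra. }
  intros s t. apply ex_RInt_Chasles with 0; auto. apply ex_RInt_swap; auto.
Qed.

Lemma hex1_ex s t : ex_RInt hex1 s t.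
Proof.
  apply ex_all.
  - intros t0 Ht. apply (hex_out t0 Ht).
  - apply blockwise with 1; [|exact hex1_blockint].
    intros x _. pose proof (hex1_bounds x). rewrite Rabs_pos_eq; lra.
Qed.
Lemma hex2_ex s t : ex_RInt hex2 s t.
Proof.
  apply ex_all.
  - intros t0 Ht. apply (hex_out t0 Ht).
  - apply blockwise with 1; [|exact hex2_blockint].
    intros x _. pose proof (hex2_bounds x). rewrite Rabs_pos_eq; lra.
Qed.

Lemma omega_F (h : R -> R) s t : (forall a b, ex_RInt h a b) ->
  omega h s t = Fh h t - Fh h s.
Proof.
  intros Hex. unfold omega, Fh. pose proof (RInt_Chasles_R h 0 s t (Hex _ _) (Hex _ _)) as E.
  unfold R_CompleteNormedModule in *. simpl in *. lra.
Qed.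

Lemma omega1 s t : omega hex1 s t = F1 t - F1 s.
Proof. apply omega_F. exact hex1_ex. Qed.
Lemma omega2 s t : omega hex2 s t = F2 t - F2 s.
Proof. apply omega_F. exact hex2_ex. Qed.

Lemma omega0 s t : omega (fun _ => 0) s t = 0.
Proof. unfold omega. rewrite RInt_const_R. ring. Qed.

Lemma Fh_mono (h : R -> R) s t : (forall a b, ex_RInt h a b) ->
  (forall x, 0 <= h x <= 1) -> s <= t -> 0 <= Fh h t - Fh h s <= t - s.
Proof.
  intros Hex Hb Hst. rewrite <- omega_F by auto. unfold omega. split.
  - apply RInt_ge_0; auto. intros x _. apply Hb.
  - rewrite <- (Rmult_1_l (t - s)), <- RInt_const_R.
    apply RInt_le; auto. apply ex_RInt_const. intros x _. apply Hb.
Qed.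

Lemma F1_mono s t : s <= t -> 0 <= F1 t - F1 s <= t - s.
Proof. apply Fh_mono. exact hex1_ex. exact hex1_bounds. Qed.
Lemma F2_mono s t : s <= t -> 0 <= F2 t - F2 s <= t - s.
Proof. apply Fh_mono. exact hex2_ex. exact hex2_bounds. Qed.

Lemma F1_0 : F1 0 = 0.
Proof. unfold F1, Fh. rewrite RInt_point. reflexivity. Qed.
Lemma F2_0 : F2 0 = 0.
Proof. unfold F2, Fh. rewrite RInt_point. reflexivity. Qed.

Lemma F1_block n s t : pp (S n) <= s -> s <= t -> t <= pp n -> F1 t - F1 s = e1 n * (t - s).
Proof.
  intros. rewrite <- omega1. unfold omega. apply RInt_const_ext. intros x Hx.
  rewrite Rmin_left in Hx by lra. rewrite Rmax_right in Hx by lra.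
  apply hex1_block. unfold inI; lra.
Qed.
Lemma F2_block n s t : pp (S n) <= s -> s <= t -> t <= pp n -> F2 t - F2 s = (1 - e1 n) * (t - s).
Proof.
  intros. rewrite <- omega2. unfold omega. apply RInt_const_ext. intros x Hx.
  rewrite Rmin_left in Hx by lra. rewrite Rmax_right in Hx by lra.
  apply hex2_block. unfold inI; lra.
Qed.

Definition Dd (s t : R) : R := (F1 t - F1 s) * (F2 t - F2 s).

Lemma det_Dd s t : detOmega Hex s t = Dd s t.
Proof. unfold detOmega, Dd. simpl. rewrite omega1, omega2, omega0. ring. Qed.

Lemma Dd_mono s' s t t' : s' <= s -> s <= t -> t <= t' -> Dd s t <= Dd s' t'.
Proof.
  intros. unfold Dd.
  pose proof (F1_mono s' s ltac:(lra)). pose proof (F1_mono s t ltac:(lra)).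
  pose proof (F1_mono t t' ltac:(lra)).
  pose proof (F2_mono s' s ltac:(lra)). pose proof (F2_mono s t ltac:(lra)).
  pose proof (F2_mono t t' ltac:(lra)).
  apply Rmult_le_compat; lra.
Qed.

Lemma Dd_nonneg s t : s <= t -> 0 <= Dd s t.
Proof.
  intros. unfold Dd. pose proof (F1_mono s t H). pose proof (F2_mono s t H).
  apply Rmult_le_pos; lra.
Qed.

Lemma Dd_le_sq s t : s <= t -> Dd s t <= (t - s) ^ 2.
Proof.
  intros. unfold Dd. pose proof (F1_mono s t H). pose proof (F2_mono s t H).
  simpl. rewrite Rmult_1_r. apply Rmult_le_compat; lra.
Qed.

Lemma Dd_diag s : Dd s s = 0.
Proof. unfold Dd. ring. Qed.

Lemma Dd_block n s t : pp (S n) <= s -> s <= t -> t <= pp n -> Dd s t = 0.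
Proof.
  intros. unfold Dd. rewrite (F1_block n), (F2_block n) by lra.
  destruct (e1_bounds n) as [E|E]; rewrite E; ring.
Qed.

Lemma Dd_two n s t : pp (S (S n)) <= s -> s <= pp (S n) -> pp (S n) <= t -> t <= pp n ->
  Dd s t = (t - pp (S n)) * (pp (S n) - s).
Proof.
  intros. unfold Dd.
  replace (F1 t - F1 s) with ((F1 t - F1 (pp (S n))) + (F1 (pp (S n)) - F1 s)) by ring.
  replace (F2 t - F2 s) with ((F2 t - F2 (pp (S n))) + (F2 (pp (S n)) - F2 s)) by ring.
  rewrite (F1_block n), (F2_block n), (F1_block (S n)), (F2_block (S n)) by lra.
  rewrite e1_S. destruct (e1_bounds n) as [E|E]; rewrite E; ring.
Qed.

Lemma F1_two n : pp (S (S n)) <= pp n ->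
  pp (S (S n)) <= F1 (pp n) - F1 (pp (S (S n))).
Proof.
  intros _. pose proof (pp_lt n). pose proof (pp_lt (S n)).
  replace (F1 (pp n) - F1 (pp (S (S n)))) with
    ((F1 (pp n) - F1 (pp (S n))) + (F1 (pp (S n)) - F1 (pp (S (S n))))) by ring.
  rewrite (F1_block n), (F1_block (S n)) by lra. rewrite e1_S.
  pose proof (ell_ge n). pose proof (ell_ge (S n)). pose proof (pp_lt (S (S n))).
  destruct (e1_bounds n) as [E|E]; rewrite E; lra.
Qed.
Lemma F2_two n : pp (S (S n)) <= F2 (pp n) - F2 (pp (S (S n))).
Proof.
  pose proof (pp_lt n). pose proof (pp_lt (S n)).
  replace (F2 (pp n) - F2 (pp (S (S n)))) with
    ((F2 (pp n) - F2 (pp (S n))) + (F2 (pp (S n)) - F2 (pp (S (S n))))) by ring.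
  rewrite (F2_block n), (F2_block (S n)) by lra. rewrite e1_S.
  pose proof (ell_ge n). pose proof (ell_ge (S n)). pose proof (pp_lt (S (S n))).
  destruct (e1_bounds n) as [E|E]; rewrite E; lra.
Qed.


Lemma lip_cont (F : R -> R) : (forall s t, s <= t -> 0 <= F t - F s <= t - s) -> continuity F.
Proof.
  intros HF x. unfold continuity_pt, continue_in, limit1_in, limit_in.
  intros eps Heps. exists eps. split; auto. intros y [_ Hy]. simpl in *.
  unfold R_dist in *. destruct (Rle_dec x y).
  - specialize (HF x y r). rewrite Rabs_pos_eq in Hy by lra. rewrite Rabs_pos_eq by lra. lra.
  - specialize (HF y x ltac:(lra)). rewrite Rabs_left in Hy by lra.
    rewrite Rabs_left1 by lra. lra.
Qed.

Lemma F1_cont : continuity F1.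
Proof. apply lip_cont. exact F1_mono. Qed.
Lemma F2_cont : continuity F2.
Proof. apply lip_cont. exact F2_mono. Qed.

Lemma Dd_cont_t s : continuity (fun t => Dd s t).
Proof.
  intro x. unfold Dd.
  apply (continuity_pt_mult (fun t => F1 t - F1 s) (fun t => F2 t - F2 s)).
  - apply (continuity_pt_minus F1 (fun _ => F1 s)); [apply F1_cont|apply continuity_pt_const; intros ? ?; reflexivity].
  - apply (continuity_pt_minus F2 (fun _ => F2 s)); [apply F2_cont|apply continuity_pt_const; intros ? ?; reflexivity].
Qed.

Lemma Dd_cont_s t : continuity (fun s => Dd s t).
Proof.
  intro x. unfold Dd.
  apply (continuity_pt_mult (fun s => F1 t - F1 s) (fun s => F2 t - F2 s)).
  - apply (continuity_pt_minus (fun _ => F1 t) F1); [apply continuity_pt_const; intros ? ?; reflexivity|apply F1_cont].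
  - apply (continuity_pt_minus (fun _ => F2 t) F2); [apply continuity_pt_const; intros ? ?; reflexivity|apply F2_cont].
Qed.

Lemma ivt (f : R -> R) a b y : continuity f -> a <= b -> f a <= y <= f b ->
  exists x, a <= x <= b /\ f x = y.
Proof.
  intros Hc Hab Hy. destruct (IVT_gen f a b y Hc) as [x [Hx Hfx]].
  - rewrite Rmin_left by lra. rewrite Rmax_right by lra. exact Hy.
  - exists x. rewrite Rmin_left, Rmax_right in Hx by lra. auto.
Qed.

Lemma ivt_dec (f : R -> R) a b y : continuity f -> a <= b -> f b <= y <= f a ->
  exists x, a <= x <= b /\ f x = y.
Proof.
  intros Hc Hab Hy. destruct (IVT_gen f a b y Hc) as [x [Hx Hfx]].
  - rewrite Rmin_right by lra. rewrite Rmax_left by lra. exact Hy.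
  - exists x. rewrite Rmin_left, Rmax_right in Hx by lra. auto.
Qed.

Lemma pp3_pos : 0 < pp 3.
Proof. apply pp_pos. Qed.

Lemma F1_lower t : 0 < t <= 1 -> pp 3 * t <= F1 t.
Proof.
  intros Ht. destruct (inI_ex t Ht) as [n [H1 H2]].
  pose proof (F1_two (S n) ltac:(pose proof (pp_lt (S (S n))); pose proof (pp_lt (S n)); lra)).
  pose proof (F1_mono (pp (S n)) t ltac:(lra)).
  pose proof (F1_mono 0 (pp (S (S (S n)))) ltac:(pose proof (pp_pos (S (S (S n)))); lra)).
  rewrite F1_0 in *.
  replace (S (S (S n))) with (n + 3)%nat in * by lia. rewrite pp_plus in *.
  pose proof (pp_pos 3). nra.
Qed.

Lemma F2_lower t : 0 < t <= 1 -> pp 3 * t <= F2 t.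
Proof.
  intros Ht. destruct (inI_ex t Ht) as [n [H1 H2]].
  pose proof (F2_two (S n)).
  pose proof (F2_mono (pp (S n)) t ltac:(lra)).
  pose proof (F2_mono 0 (pp (S (S (S n)))) ltac:(pose proof (pp_pos (S (S (S n)))); lra)).
  rewrite F2_0 in *.
  replace (S (S (S n))) with (n + 3)%nat in * by lia. rewrite pp_plus in *.
  pose proof (pp_pos 3). nra.
Qed.

Lemma Dd0_lower t : 0 < t <= 1 -> (pp 3 * t) ^ 2 <= Dd 0 t.
Proof.
  intros Ht. unfold Dd. rewrite F1_0, F2_0, !Rminus_0_r.
  pose proof (F1_lower t Ht). pose proof (F2_lower t Ht). pose proof pp3_pos.
  simpl. rewrite Rmult_1_r. apply Rmult_le_compat; nra.
Qed.

Lemma Dd0_upper t : 0 <= t -> Dd 0 t <= t ^ 2.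
Proof. intros. pose proof (Dd_le_sq 0 t H). rewrite Rminus_0_r in H0. exact H0. Qed.


Lemma exp_le_inv' a b : exp a <= exp b -> a <= b.
Proof. intros H. destruct (Rle_dec a b); auto. exfalso. pose proof (exp_increasing b a ltac:(lra)). lra. Qed.

Lemma inv_r2 r : 0 < r -> 1 / r ^ 2 = exp (- (2 * ln r)).
Proof.
  intros Hr. rewrite exp_Ropp. replace (2 * ln r) with (ln r + ln r) by ring.
  rewrite exp_plus, exp_ln by lra. field. lra.
Qed.

Lemma sq_ge_exp x L : 0 < x -> exp (- (2 * L)) <= x ^ 2 -> exp (- L) <= x.
Proof.
  intros Hx H. destruct (Rle_dec (exp (-L)) x); auto. exfalso.
  assert (x ^ 2 < exp (- L) ^ 2).
  { simpl. rewrite !Rmult_1_r. apply Rmult_le_0_lt_compat; lra. }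
  replace (exp (-L) ^ 2) with (exp (- (2 * L))) in H0.
  - lra.
  - simpl. rewrite Rmult_1_r, <- exp_plus. f_equal. ring.
Qed.

Lemma sq_le_exp x L : 0 <= x -> x ^ 2 <= exp (- (2 * L)) -> x <= exp (- L).
Proof.
  intros Hx H. destruct (Rle_dec x (exp (-L))); auto. exfalso.
  assert (exp (- L) ^ 2 < x ^ 2).
  { pose proof (exp_pos (-L)). simpl. rewrite !Rmult_1_r. apply Rmult_le_0_lt_compat; lra. }
  replace (exp (-L) ^ 2) with (exp (- (2 * L))) in H0.
  - lra.
  - simpl. rewrite Rmult_1_r, <- exp_plus. f_equal. ring.
Qed.

Definition lev (t : R) : nat := epsilon (inhabits 0%nat) (fun n => inI n t).
Lemma lev_spec t : 0 < t <= 1 -> inI (lev t) t.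
Proof. intros H. unfold lev. apply epsilon_spec. apply inI_ex. exact H. Qed.

Lemma lev_le_ln t : 0 < t <= 1 -> INR (lev t) <= - ln t.
Proof.
  intros H. destruct (lev_spec t H) as [_ H2]. unfold pp in H2. set (n := lev t) in *.
  rewrite <- (exp_ln t) in H2 by lra. apply exp_le_inv' in H2. lra.
Qed.

Lemma lev_gt_ln t : 0 < t <= 1 -> - ln t - 1 < INR (lev t).
Proof.
  intros H. destruct (lev_spec t H) as [H1 _]. unfold pp in H1. rewrite S_INR in H1.
  set (n := lev t) in *. rewrite <- (exp_ln t) in H1 by lra. apply exp_lt_inv in H1. lra.
Qed.

Lemma sigma_S H r j : Defs.sigma H r (S j) =
  if Rlt_dec (1 / r ^ 2) (detOmega H (Defs.sigma H r j) 1)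
  then the_R (fun s => Defs.sigma H r j < s < 1 /\ detOmega H (Defs.sigma H r j) s = 1 / r ^ 2)
  else 1.
Proof. reflexivity. Qed.

Section Alg.
Variable r : R.
Hypothesis Hr : exp 40 <= r.
Let L := ln r.
Let y := 1 / r ^ 2.

Lemma r_pos : 0 < r.
Proof. pose proof (exp_pos 40). lra. Qed.
Lemma L_ge : 40 <= L.
Proof. unfold L. rewrite <- (ln_exp 40). apply ln_le; [apply exp_pos|exact Hr]. Qed.
Lemma y_eq : y = exp (- (2 * L)).
Proof. unfold y, L. apply inv_r2. apply r_pos. Qed.
Lemma y_pos : 0 < y.
Proof. rewrite y_eq. apply exp_pos. Qed.

Lemma y_lt_exp a : - (2 * L) < a -> y < exp a.
Proof. intros. rewrite y_eq. apply exp_increasing. lra. Qed.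

Lemma D01_gt : y < Dd 0 1.
Proof.
  pose proof (Dd0_lower 1 ltac:(lra)). eapply Rlt_le_trans; [|exact H].
  rewrite Rmult_1_r. unfold pp. simpl (INR 3).
  replace (exp (-(1+1+1)) ^ 2) with (exp (-6)).
  - apply y_lt_exp. pose proof L_ge. lra.
  - simpl. rewrite Rmult_1_r, <- exp_plus. f_equal. ring.
Qed.

Definition PP (i : nat) : Prop := y < detOmega Hex (Defs.sigma Hex r i) 1.

Lemma sigma_step p : 0 <= p < 1 -> y < Dd p 1 ->
  let s := the_R (fun s => p < s < 1 /\ detOmega Hex p s = y) in
  p < s < 1 /\ Dd p s = y.
Proof.
  intros Hp Hy s.
  assert (Hexs : exists s, p < s < 1 /\ detOmega Hex p s = y).
  { destruct (ivt (fun t => Dd p t) p 1 y (Dd_cont_t p) ltac:(lra)) as [x [Hx Hfx]].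
    - rewrite Dd_diag. pose proof y_pos. lra.
    - exists x. rewrite det_Dd. split; auto. split.
      + destruct (Rle_lt_or_eq_dec _ _ (proj1 Hx)); auto. subst. rewrite Dd_diag in Hfx.
        pose proof y_pos. lra.
      + destruct (Rle_lt_or_eq_dec _ _ (proj2 Hx)); auto. subst. lra. }
  unfold s, the_R. rewrite <- det_Dd. apply epsilon_spec. exact Hexs.
Qed.

Lemma chain m : (forall i, (i < m)%nat -> PP i) ->
  (0 <= Defs.sigma Hex r m < 1) /\
  (forall i, (i < m)%nat -> Defs.sigma Hex r i < Defs.sigma Hex r (S i) /\
     Dd (Defs.sigma Hex r i) (Defs.sigma Hex r (S i)) = y).
Proof.
  induction m as [|m IH]; intros HP.
  - simpl. split; [lra|]. intros i Hi. lia.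
  - destruct IH as [H1 H2]. { intros i Hi. apply HP. lia. }
    assert (Hm : PP m) by (apply HP; lia).
    unfold PP in Hm. rewrite det_Dd in Hm.
    pose proof (sigma_step (Defs.sigma Hex r m) H1 Hm) as [Hs1 Hs2].
    assert (Eq : Defs.sigma Hex r (S m) = the_R (fun s => Defs.sigma Hex r m < s < 1 /\ detOmega Hex (Defs.sigma Hex r m) s = y)).
    { rewrite sigma_S. destruct (Rlt_dec (1 / r ^ 2) (detOmega Hex (Defs.sigma Hex r m) 1)) as [_|Hn].
      - reflexivity.
      - exfalso. apply Hn. rewrite det_Dd. exact Hm. }
    rewrite <- Eq in Hs1, Hs2. split; [split; [apply Rle_trans with (Defs.sigma Hex r m); [apply H1|left; apply Hs1]|apply Hs1]|].
    intros i Hi. destruct (Nat.eq_dec i m) as [->|Hne].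
    + split; [apply Hs1|exact Hs2].
    + apply H2. lia.
Qed.

Lemma chain_mono m j k : (forall i, (i < m)%nat -> PP i) -> (j + k <= m)%nat ->
  Defs.sigma Hex r j <= Defs.sigma Hex r (j + k).
Proof.
  intros HP Hjk. destruct (chain m HP) as [_ Hc]. induction k as [|k IH].
  - rewrite Nat.add_0_r. lra.
  - rewrite Nat.add_succ_r. destruct (Hc (j + k)%nat ltac:(lia)). specialize (IH ltac:(lia)). lra.
Qed.

Lemma chain_pos m i : (forall j, (j < m)%nat -> PP j) -> (1 <= i <= m)%nat ->
  0 < Defs.sigma Hex r i < 1.
Proof.
  intros HP Hi. destruct (chain m HP) as [Hm Hc].
  pose proof (chain_mono m 1 (i - 1) HP ltac:(lia)).
  pose proof (chain_mono m i (m - i) HP ltac:(lia)).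
  replace (1 + (i - 1))%nat with i in H by lia.
  replace (i + (m - i))%nat with m in H0 by lia.
  destruct (Hc 0%nat ltac:(lia)) as [H0' _]. change (Defs.sigma Hex r 0) with 0 in H0'. lra.
Qed.
End Alg.


Section Kap.
Variable r : R.
Hypothesis Hr : exp 40 <= r.
Let L := ln r.
Let y := 1 / r ^ 2.
Let sg := Defs.sigma Hex r.

Lemma yE : y = exp (- (2 * L)).
Proof. apply y_eq. exact Hr. Qed.
Lemma ypos : 0 < y.
Proof. apply y_pos. exact Hr. Qed.
Lemma LE : 40 <= L.
Proof. apply L_ge. exact Hr. Qed.

Lemma lev_decr m i : (forall j, (j < m)%nat -> PP r j) -> (1 <= i)%nat -> (S i <= m)%nat ->
  (lev (sg (S i)) < lev (sg i))%nat.
Proof.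
  intros HP Hi Him.
  pose proof (chain_pos r Hr m i HP ltac:(lia)) as Hi1.
  pose proof (chain_pos r Hr m (S i) HP ltac:(lia)) as Hi2.
  destruct (chain r Hr m HP) as [_ Hc]. destruct (Hc i ltac:(lia)) as [Hlt HD].
  pose proof (lev_spec _ (conj (proj1 Hi1) (Rlt_le _ _ (proj2 Hi1)))) as Ha.
  pose proof (lev_spec _ (conj (proj1 Hi2) (Rlt_le _ _ (proj2 Hi2)))) as Hb.
  fold sg in Ha, Hb, Hlt, HD.
  pose proof (inI_order _ _ _ _ Ha Hb (Rlt_le _ _ Hlt)).
  destruct (Nat.eq_dec (lev (sg (S i))) (lev (sg i))) as [E|]; [|lia].
  exfalso. rewrite E in Hb. destruct Ha, Hb.
  rewrite (Dd_block (lev (sg i)) (sg i) (sg (S i))) in HD by lra.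
  pose proof ypos. fold y in HD. lra.
Qed.

Lemma lev_chain m : (forall j, (j < m)%nat -> PP r j) ->
  forall i, (1 <= i <= m)%nat -> (lev (sg i) + (i - 1) <= lev (sg 1))%nat.
Proof.
  intros HP i. induction i as [|i IH]; intros Hi; [lia|].
  destruct (Nat.eq_dec i 0) as [->|Hne]; [simpl; lia|].
  specialize (IH ltac:(lia)). pose proof (lev_decr m i HP ltac:(lia) ltac:(lia)). lia.
Qed.

Lemma sigma1_facts m : (1 <= m)%nat -> (forall j, (j < m)%nat -> PP r j) ->
  exp (- L) <= sg 1 /\ sg 1 <= exp (3 - L) /\ 0 < sg 1 < 1.
Proof.
  intros Hm HP. pose proof (chain_pos r Hr m 1 HP ltac:(lia)) as Hp. fold sg in Hp.
  destruct (chain r Hr m HP) as [_ Hc]. destruct (Hc 0%nat ltac:(lia)) as [_ HD].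
  change (Defs.sigma Hex r 0) with 0 in HD. fold sg in HD. fold y in HD.
  split; [|split; [|exact Hp]].
  - apply sq_ge_exp; [lra|]. rewrite <- yE, <- HD. apply Dd0_upper. lra.
  - pose proof (Dd0_lower (sg 1) ltac:(lra)). rewrite HD, yE in H.
    pose proof pp3_pos.
    apply sq_le_exp in H; [|nra].
    unfold pp in H. simpl (INR 3) in H.
    apply Rmult_le_compat_r with (r := exp (1+1+1)) in H; [|left; apply exp_pos].
    replace (exp (- (1 + 1 + 1)) * sg 1 * exp (1 + 1 + 1)) with (sg 1) in H.
    + replace (3 - L) with (-L + (1+1+1)) by ring. rewrite exp_plus. exact H.
    + rewrite Rmult_comm, <- Rmult_assoc, <- exp_plus. replace (1+1+1 + - (1+1+1)) with 0 by ring.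
      rewrite exp_0. ring.
Qed.

Lemma chain_bound m : (1 <= m)%nat -> (forall j, (j < m)%nat -> PP r j) -> INR m <= L + 1.
Proof.
  intros Hm HP. destruct (sigma1_facts m Hm HP) as [H1 [_ H3]].
  pose proof (lev_le_ln (sg 1) ltac:(lra)).
  assert (ln (sg 1) >= - L).
  { rewrite <- (ln_exp (-L)). apply Rle_ge. apply ln_le; [apply exp_pos|exact H1]. }
  pose proof (lev_chain m HP m ltac:(lia)).
  assert (Hq : INR (m - 1) <= INR (lev (sg 1))) by (apply le_INR; lia).
  rewrite minus_INR in Hq by lia. simpl in Hq. lra.
Qed.

Lemma kappa_aux n : (forall i, (i <= n)%nat -> PP r i) \/ exists k, kappa_spec Hex r k.
Proof.
  induction n as [|n IH].
  - destruct (classic (PP r 0)) as [H|H].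
    + left. intros i Hi. assert (i = 0)%nat by lia. subst. exact H.
    + right. exists 1%nat. split; [lia|]. split; [exact H|]. intros i Hi. simpl in Hi. lia.
  - destruct IH as [IH|IH]; [|right; exact IH].
    destruct (classic (PP r (S n))) as [H|H].
    + left. intros i Hi. destruct (Nat.eq_dec i (S n)) as [->|]; [exact H|apply IH; lia].
    + right. exists (S (S n)). split; [lia|]. simpl (S (S n) - 1)%nat. split; [exact H|].
      intros i Hi. apply IH. lia.
Qed.

Lemma kappa_ex : exists k, kappa_spec Hex r k.
Proof.
  assert (0 <= L + 1) by (pose proof LE; lra).
  destruct (nat_floor _ H) as [n [Hn1 Hn2]].
  destruct (kappa_aux n) as [Hall|Hk]; auto.
  exfalso. pose proof (chain_bound (S n) ltac:(lia) ltac:(intros j Hj; apply Hall; lia)).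
  rewrite S_INR in H0. lra.
Qed.

Lemma kappa_upper k : kappa_spec Hex r k -> INR k <= 2 * L.
Proof.
  intros [Hk1 [Hk2 Hk3]]. pose proof LE.
  destruct (Nat.eq_dec k 1) as [->|Hne]; [simpl; lra|].
  pose proof (chain_bound (k - 1) ltac:(lia) Hk3).
  rewrite minus_INR in H0 by lia. simpl in H0. lra.
Qed.

Lemma lev_step m i : (forall j, (j < m)%nat -> PP r j) -> (1 <= i)%nat -> (S i <= m)%nat ->
  INR (lev (sg i)) - 2 <= INR (lev (sg (S i))) \/ L - 5/2 <= INR (lev (sg (S i))).
Proof.
  intros HP Hi Him.
  pose proof (chain_pos r Hr m i HP ltac:(lia)) as Hi1.
  pose proof (chain_pos r Hr m (S i) HP ltac:(lia)) as Hi2.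
  destruct (chain r Hr m HP) as [_ Hc]. destruct (Hc i ltac:(lia)) as [Hlt HD].
  pose proof (lev_spec _ (conj (proj1 Hi1) (Rlt_le _ _ (proj2 Hi1)))) as Ha.
  pose proof (lev_spec _ (conj (proj1 Hi2) (Rlt_le _ _ (proj2 Hi2)))) as Hb.
  fold sg in Ha, Hb, Hlt, HD. fold y in HD.
  set (a := lev (sg i)) in *. set (b := lev (sg (S i))) in *.
  destruct (le_lt_dec a (b + 2)) as [Hab|Hab].
  - left. apply le_INR in Hab. rewrite plus_INR in Hab. simpl in Hab. lra.
  - right. destruct Ha as [Ha1 Ha2]. destruct Hb as [Hb1 Hb2].
    pose proof (pp_mono (b + 3) a ltac:(lia)).
    replace (b + 3)%nat with (S (S (S b))) in H by lia.
    pose proof (pp_lt b). pose proof (pp_lt (S b)). pose proof (pp_lt (S (S b))).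
    pose proof (Dd_mono (sg i) (pp (S (S (S b)))) (pp (S b)) (sg (S i)) ltac:(lra) ltac:(lra) ltac:(lra)).
    rewrite (Dd_two (S b)) in H3 by lra.
    pose proof (ell_ge (S b)). pose proof (ell_ge (S (S b))).
    pose proof (pp_pos (S (S b))). pose proof (pp_pos (S (S (S b)))).
    assert (pp (S (S b)) * pp (S (S (S b))) <= y).
    { rewrite <- HD. eapply Rle_trans; [|exact H3]. apply Rmult_le_compat; lra. }
    rewrite yE in H8. unfold pp in H8. rewrite <- exp_plus in H8.
    apply exp_le_inv' in H8. rewrite !S_INR in H8. lra.
Qed.

Lemma lev_lower m : (1 <= m)%nat -> (forall j, (j < m)%nat -> PP r j) ->
  forall i, (1 <= i <= m)%nat -> L - 4 - 2 * (INR i - 1) <= INR (lev (sg i)).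
Proof.
  intros Hm HP i. induction i as [|i IH]; intros Hi; [lia|].
  destruct (Nat.eq_dec i 0) as [->|Hne].
  - destruct (sigma1_facts m Hm HP) as [_ [H2 H3]].
    pose proof (lev_gt_ln (sg 1) ltac:(lra)).
    assert (ln (sg 1) <= 3 - L).
    { rewrite <- (ln_exp (3 - L)). apply ln_le; lra. }
    simpl. lra.
  - specialize (IH ltac:(lia)). rewrite S_INR.
    destruct (lev_step m i HP ltac:(lia) ltac:(lia)) as [H|H].
    + lra.
    + assert (1 <= INR i) by (apply (le_INR 1); lia). lra.
Qed.

Lemma kappa_lower k : kappa_spec Hex r k -> L / 4 <= INR k.
Proof.
  intros [Hk1 [Hk2 Hk3]]. pose proof LE.
  destruct (Nat.eq_dec k 1) as [->|Hne].
  - exfalso. apply Hk2. simpl. change (Defs.sigma Hex r 0) with 0. rewrite det_Dd.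
    apply (D01_gt r Hr).
  - set (m := (k - 1)%nat) in *.
    pose proof (lev_lower m ltac:(lia) Hk3 m ltac:(lia)) as Hl.
    pose proof (chain_pos r Hr m m Hk3 ltac:(lia)) as Hp. fold sg in Hp.
    pose proof (lev_spec _ (conj (proj1 Hp) (Rlt_le _ _ (proj2 Hp)))) as [Ha1 Ha2].
    assert (Hlev : (lev (sg m) <= 1)%nat).
    { destruct (le_lt_dec (lev (sg m)) 1) as [|Hlt]; auto. exfalso. apply Hk2.
      rewrite det_Dd. fold sg.
      pose proof (pp_mono 2 (lev (sg m)) ltac:(lia)).
      pose proof (pp_lt 0). pose proof (pp_lt 1). rewrite pp_0 in *.
      pose proof (Dd_mono (sg m) (pp 2) 1 1 ltac:(lra) ltac:(lra) ltac:(lra)).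
      pose proof (Dd_two 0 (pp 2) (pp 0)). rewrite pp_0 in H4.
      rewrite H4 in H3 by lra.
      pose proof (ell_ge 0). pose proof (ell_ge 1). rewrite pp_0 in *.
      pose proof (pp_pos 1). pose proof (pp_pos 2).
      assert (pp 1 * pp 2 <= Dd (sg m) 1) by (eapply Rle_trans; [|exact H3]; apply Rmult_le_compat; lra).
      eapply Rlt_le_trans; [|exact H9]. fold y. rewrite yE. unfold pp. rewrite <- exp_plus.
      apply exp_increasing. simpl. lra. }
    apply le_INR in Hlev. simpl in Hlev.
    assert (INR k = INR m + 1) by (unfold m; rewrite minus_INR by lia; simpl; ring).
    lra.
Qed.
End Kap.


Section KH.
Variable r : R.
Hypothesis Hr : exp 40 <= r.
Let L := ln r.
Let y := 1 / r ^ 2.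
Let th := t_hat Hex r.
Let sh := s_hat Hex r.
Let K := K_H Hex r.

Lemma yE' : y = exp (- (2 * L)).
Proof. apply y_eq. exact Hr. Qed.
Lemma ypos' : 0 < y.
Proof. apply y_pos. exact Hr. Qed.
Lemma LE' : 40 <= L.
Proof. apply L_ge. exact Hr. Qed.
Lemma r2E : r ^ 2 = / y.
Proof. unfold y. pose proof (r_pos r Hr). field. lra. Qed.

Lemma Dd0_y_bounds t : 0 < t <= 1 -> Dd 0 t = y -> exp (- L) <= t /\ t <= exp (3 - L).
Proof.
  intros Ht HD. split.
  - apply sq_ge_exp; [lra|]. rewrite <- yE', <- HD. apply Dd0_upper. lra.
  - pose proof (Dd0_lower t Ht). rewrite HD, yE' in H.
    pose proof pp3_pos.
    apply sq_le_exp in H; [|nra].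
    unfold pp in H. simpl (INR 3) in H.
    apply Rmult_le_compat_r with (r := exp (1+1+1)) in H; [|left; apply exp_pos].
    replace (exp (- (1 + 1 + 1)) * t * exp (1 + 1 + 1)) with t in H.
    + replace (3 - L) with (-L + (1+1+1)) by ring. rewrite exp_plus. exact H.
    + rewrite Rmult_comm, <- Rmult_assoc, <- exp_plus. replace (1+1+1 + - (1+1+1)) with 0 by ring.
      rewrite exp_0. ring.
Qed.

Lemma th_spec : 0 < th < 1 /\ Dd 0 th = y.
Proof.
  assert (Hexs : exists t, 0 <= t <= 1 /\ detOmega Hex 0 t = 1 / r ^ 2).
  { destruct (ivt (fun t => Dd 0 t) 0 1 y (Dd_cont_t 0) ltac:(lra)) as [x [Hx Hfx]].
    - rewrite Dd_diag. pose proof (D01_gt r Hr) as HD0. fold y in HD0. pose proof ypos'. split; lra.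
    - exists x. rewrite det_Dd. auto. }
  assert (Hs : 0 <= th <= 1 /\ detOmega Hex 0 th = 1/r^2)
    by (unfold th, t_hat, the_R; apply epsilon_spec; exact Hexs).
  rewrite det_Dd in Hs. fold y in Hs. destruct Hs as [[H0 H1] HD].
  split; [|exact HD]. split.
  - destruct (Rle_lt_or_eq_dec _ _ H0); auto. subst. rewrite <- e, Dd_diag in HD.
    pose proof ypos'. lra.
  - destruct (Rle_lt_or_eq_dec _ _ H1); auto. rewrite e in HD. pose proof (D01_gt r Hr). fold y in H. lra.
Qed.

Lemma th_bounds : exp (- L) <= th <= exp (3 - L).
Proof. destruct th_spec as [H1 H2]. apply Dd0_y_bounds; auto. lra. Qed.

Lemma sh_spec t : th <= t <= 1 -> 0 <= sh t <= t /\ Dd (sh t) t = y.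
Proof.
  intros Ht. destruct th_spec as [Hth HD].
  assert (Hexs : exists s, 0 <= s <= t /\ detOmega Hex s t = 1 / r ^ 2).
  { destruct (ivt_dec (fun s => Dd s t) 0 t y (Dd_cont_s t) ltac:(lra)) as [x [Hx Hfx]].
    - rewrite Dd_diag. pose proof ypos'. split; [lra|].
      rewrite <- HD. apply Dd_mono; lra.
    - exists x. rewrite det_Dd. auto. }
  assert (Hs : 0 <= sh t <= t /\ detOmega Hex (sh t) t = 1/r^2)
    by (unfold sh, s_hat, the_R; apply epsilon_spec; exact Hexs).
  rewrite det_Dd in Hs. exact Hs.
Qed.

Lemma sh_AB t : th <= t <= 1 ->
  0 < F1 t - F1 (sh t) /\ 0 < F2 t - F2 (sh t) /\
  (F1 t - F1 (sh t)) * (F2 t - F2 (sh t)) = y /\ F2 t - F2 (sh t) <= 1.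
Proof.
  intros Ht. destruct (sh_spec t Ht) as [Hs HD]. unfold Dd in HD.
  pose proof (F1_mono (sh t) t ltac:(lra)). pose proof (F2_mono (sh t) t ltac:(lra)).
  pose proof ypos'.
  assert (F1 t - F1 (sh t) <> 0) by (intro E; rewrite E in HD; lra).
  assert (F2 t - F2 (sh t) <> 0) by (intro E; rewrite E in HD; lra).
  repeat split; try lra.
Qed.

Lemma ind_true (P : R -> Prop) t : P t -> Defs.ind P t = 1.
Proof. intros. unfold Defs.ind. destruct (excluded_middle_informative (P t)); tauto. Qed.
Lemma ind_false (P : R -> Prop) t : ~ P t -> Defs.ind P t = 0.
Proof. intros. unfold Defs.ind. destruct (excluded_middle_informative (P t)); tauto. Qed.

Lemma K_lo t : 0 <= t < th -> K t = / y * F2 t * hex1 t.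
Proof.
  intros Ht. unfold K, K_H. fold th. simpl h1; simpl h2; simpl h3.
  rewrite ind_true by lra. rewrite ind_false by lra.
  rewrite omega2, omega0, F2_0. fold y. unfold Rdiv. ring_simplify.
  replace (y + 0 ^ 2) with y by ring. ring.
Qed.

Lemma K_hi t : th <= t < 1 -> K t = hex1 t / (F1 t - F1 (sh t)).
Proof.
  intros Ht. unfold K, K_H. fold th. simpl h1; simpl h2; simpl h3. fold sh.
  rewrite ind_false by lra. rewrite ind_true by lra.
  rewrite omega1. ring.
Qed.

Lemma K_one : K 1 = 0.
Proof.
  destruct th_spec as [Hth _].
  unfold K, K_H. fold th. rewrite !ind_false by lra. ring.
Qed.

Lemma K_hi' t : th <= t < 1 -> K t = / y * hex1 t * (F2 t - F2 (sh t)).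
Proof.
  intros Ht. rewrite K_hi by auto. destruct (sh_AB t ltac:(lra)) as [HA [HB [HAB _]]].
  rewrite <- HAB. field. lra.
Qed.

Lemma K_bounds t : 0 <= t <= 1 -> 0 <= K t <= / y.
Proof.
  intros Ht. pose proof ypos' as Hy. pose proof (hex1_bounds t) as Hh. assert (Hiy : 0 < / y) by (apply Rinv_0_lt_compat; lra).
  destruct (Rlt_le_dec t th) as [H1|H1].
  - rewrite K_lo by lra. pose proof (F2_mono 0 t ltac:(lra)) as H2. rewrite F2_0 in H2.
    split.
    + apply Rmult_le_pos; [|lra]. apply Rmult_le_pos; lra.
    + rewrite Rmult_assoc. rewrite <- (Rmult_1_r (/ y)) at 2. apply Rmult_le_compat_l; [lra|].
      apply Rle_trans with (1 * 1); [apply Rmult_le_compat; lra|lra].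
  - destruct (Rle_lt_or_eq_dec _ _ (proj2 Ht)) as [Ht1|Ht1].
    + rewrite K_hi' by lra. destruct (sh_AB t ltac:(lra)) as [HA [HB [HAB HB1]]].
      split.
      * apply Rmult_le_pos; [|lra]. apply Rmult_le_pos; lra.
      * rewrite Rmult_assoc. rewrite <- (Rmult_1_r (/ y)) at 2. apply Rmult_le_compat_l; [lra|].
        apply Rle_trans with (1 * 1); [apply Rmult_le_compat; lra|lra].
    + subst. rewrite K_one. lra.
Qed.

Lemma K_odd n t : inI n t -> e1 n = 0 -> K t = 0.
Proof.
  intros Hn He. pose proof (inI_range n t Hn) as Ht.
  destruct (Rlt_le_dec t th) as [H1|H1].
  - rewrite K_lo by lra. rewrite (hex1_block n t Hn), He. ring.
  - destruct (Rle_lt_or_eq_dec _ _ (proj2 Ht)) as [Ht1|Ht1].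
    + rewrite K_hi' by lra. rewrite (hex1_block n t Hn), He. ring.
    + subst. apply K_one.
Qed.
End KH.


Section KI.
Variable r : R.
Hypothesis Hr : exp 40 <= r.
Let y := 1 / r ^ 2.
Let th := t_hat Hex r.
Let sh := s_hat Hex r.
Let K := K_H Hex r.

Definition Kf (t : R) : R := / (F1 t - F1 (s_hat Hex r t)).

Lemma Kf_mono n a b : e1 n = 1 -> pp (S n) <= a -> a <= b -> b <= pp n -> th <= a ->
  forall x z, a <= x -> x <= z -> z <= b -> Kf z <= Kf x.
Proof.
  intros He Ha Hab Hb Hth x z Hx Hxz Hz. unfold Kf. fold sh.
  pose proof (pp_le1 n).
  destruct (sh_AB r Hr x ltac:(fold th; lra)) as [A1 [B1 [AB1 _]]].
  destruct (sh_AB r Hr z ltac:(fold th; lra)) as [A2 [B2 [AB2 _]]].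
  fold sh in A1, B1, AB1, A2, B2, AB2.
  apply Rinv_le_contravar; [exact A1|].
  destruct (Rle_dec (F1 x - F1 (sh x)) (F1 z - F1 (sh z))) as [|Hlt]; auto.
  exfalso.
  assert (HF2 : F2 z - F2 x = 0).
  { rewrite (F2_block n x z) by lra. rewrite He. ring. }
  assert (HF1 : 0 <= F1 z - F1 x) by (apply F1_mono; lra).
  assert (HB : F2 x - F2 (sh x) < F2 z - F2 (sh z)).
  { destruct (Rle_dec (F2 z - F2 (sh z)) (F2 x - F2 (sh x))) as [Hle|]; [|lra].
    exfalso. assert ((F1 z - F1 (sh z)) * (F2 z - F2 (sh z)) < (F1 x - F1 (sh x)) * (F2 x - F2 (sh x))).
    { apply Rlt_le_trans with ((F1 x - F1 (sh x)) * (F2 z - F2 (sh z))).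
      - apply Rmult_lt_compat_r; lra.
      - apply Rmult_le_compat_l; lra. }
    lra. }
  assert (Hs : sh z < sh x).
  { destruct (Rlt_le_dec (sh z) (sh x)) as [|Hle]; auto.
    pose proof (F2_mono (sh x) (sh z) Hle). lra. }
  pose proof (F1_mono (sh z) (sh x) ltac:(lra)). lra.
Qed.

Lemma K_block n a b : pp (S n) <= a -> a <= b -> b <= pp n -> ex_RInt K a b.
Proof.
  intros Ha Hab Hb. pose proof (pp_le1 n). pose proof (pp_pos (S n)).
  destruct (e1_bounds n) as [He|He].
  - apply ex_RInt_const_ext with 0. intros x Hx.
    rewrite Rmin_left in Hx by lra. rewrite Rmax_right in Hx by lra.
    apply (K_odd r Hr n x); [unfold inI; lra|exact He].
  - assert (Low : forall a' b', a <= a' -> a' <= b' -> b' <= b -> b' <= th -> ex_RInt K a' b').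
    { intros a' b' H1 H2 H3 H4. apply ex_RInt_const_ext with (/ y * F2 a' * 1).
      intros x Hx. rewrite Rmin_left in Hx by lra. rewrite Rmax_right in Hx by lra.
      unfold K. rewrite (K_lo r x) by (fold th; lra). fold y.
      rewrite (hex1_block n x) by (unfold inI; lra). rewrite He.
      assert (F2 x - F2 a' = 0) by (rewrite (F2_block n a' x) by lra; rewrite He; ring).
      replace (F2 x) with (F2 a') by lra. reflexivity. }
    assert (High : forall a' b', a <= a' -> a' <= b' -> b' <= b -> th <= a' -> ex_RInt K a' b').
    { intros a' b' H1 H2 H3 H4. apply ex_RInt_ext with Kf.
      - intros x Hx. rewrite Rmin_left in Hx by lra. rewrite Rmax_right in Hx by lra.
        unfold K. rewrite (K_hi r x) by (fold th; lra).
        rewrite (hex1_block n x) by (unfold inI; lra). rewrite He. unfold Kf. unfold Rdiv. rewrite Rmult_1_l. reflexivity.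
      - apply mono_dec_RInt; [lra|]. intros x z Hx Hxz Hz.
        apply (Kf_mono n a' b'); auto; lra. }
    destruct (Rle_dec b th) as [Hbt|Hbt]; [apply Low; lra|].
    destruct (Rle_dec th a) as [Hat|Hat]; [apply High; lra|].
    apply ex_RInt_Chasles with th; [apply Low|apply High]; lra.
Qed.

Lemma K_int01 : ex_RInt K 0 1.
Proof.
  apply blockwise with (/ y); [|exact K_block].
  intros x Hx. destruct (K_bounds r Hr x Hx). fold y. rewrite Rabs_pos_eq; auto.
Qed.

Lemma K_int a b : 0 <= a -> a <= b -> b <= 1 -> ex_RInt K a b.
Proof. intros. apply ex_RInt_sub with 0 1; auto. apply K_int01. Qed.
End KI.


Lemma RInt_point_R (f : R -> R) a : RInt f a a = 0.
Proof. rewrite RInt_point. reflexivity. Qed.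

Lemma int_inv p c b : p < c -> c <= b ->
  is_RInt (fun t => / (t - p)) c b (ln (b - p) - ln (c - p)).
Proof.
  intros Hc Hb.
  apply (is_RInt_derive (fun t => ln (t - p)) (fun t => / (t - p))).
  - intros x Hx. rewrite Rmin_left in Hx by lra. rewrite Rmax_right in Hx by lra.
    auto_derive; [lra|]. field. lra.
  - intros x Hx. rewrite Rmin_left in Hx by lra. rewrite Rmax_right in Hx by lra.
    apply (ex_derive_continuous (K:=R_AbsRing) (V:=R_NormedModule) (fun t => / (t - p))). auto_derive. lra.
Qed.

Lemma RInt_inv p c b : p < c -> c <= b ->
  ex_RInt (fun t => / (t - p)) c b /\ RInt (fun t => / (t - p)) c b = ln (b - p) - ln (c - p).
Proof.
  intros. pose proof (int_inv p c b H H0). split.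
  - eexists. exact H1.
  - apply is_RInt_unique. exact H1.
Qed.

Lemma piece_up (f : R -> R) a b p Y : 0 < Y -> Y <= 1 -> p <= a -> a <= b -> b - p <= 1 ->
  ex_RInt f a b -> (forall t, a < t < b -> f t <= / Y) ->
  (forall t, a < t < b -> f t <= / (t - p)) -> RInt f a b <= 1 - ln Y.
Proof.
  intros HY HY1 Hpa Hab Hbp Hex Hf1 Hf2.
  assert (HlnY : ln Y <= 0) by (rewrite <- ln_1; apply ln_le; lra).
  assert (HiY : 0 < / Y) by (apply Rinv_0_lt_compat; lra).
  set (m := p + Y).
  assert (Hc1 : forall c, a <= c -> c <= b -> c <= m -> RInt f a c <= 1).
  { intros c H1 H2 H3. apply Rle_trans with (RInt (fun _ => / Y) a c).
    - apply RInt_le; auto. + apply ex_RInt_sub with a b; auto; lra. + apply ex_RInt_const.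
      + intros x Hx. apply Hf1. lra.
    - rewrite RInt_const_R. apply Rle_trans with (/ Y * Y).
      + apply Rmult_le_compat_l; unfold m in *; lra.
      + rewrite Rinv_l by lra. lra. }
  destruct (Rle_dec b m) as [Hbm|Hbm].
  - pose proof (Hc1 b Hab (Rle_refl b) Hbm). lra.
  - set (c := Rmax a m).
    assert (Hac : a <= c) by apply Rmax_l. assert (Hmc : m <= c) by apply Rmax_r.
    assert (Hcb : c <= b) by (apply Rmax_lub; lra).
    assert (Hcm : c <= m \/ c = a).
    { unfold c. destruct (Rle_dec a m); [left; rewrite Rmax_right; lra|right; rewrite Rmax_left; lra]. }
    rewrite <- (RInt_Chasles_R f a c b).
    + assert (RInt f a c <= 1).
      { destruct Hcm as [Hcm|Hcm]; [apply Hc1; lra|]. rewrite Hcm. rewrite RInt_point_R. lra. }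
      assert (Hp : p < c) by (unfold m in *; lra).
      destruct (RInt_inv p c b Hp Hcb) as [Hie Hiv].
      assert (RInt f c b <= RInt (fun t => / (t - p)) c b).
      { apply RInt_le; auto. apply ex_RInt_sub with a b; auto; lra.
        intros x Hx. apply Hf2. lra. }
      rewrite Hiv in H0.
      assert (ln (b - p) <= 0) by (rewrite <- ln_1; apply ln_le; lra).
      assert (ln Y <= ln (c - p)) by (apply ln_le; unfold m in *; lra).
      lra.
    + apply ex_RInt_sub with a b; auto; lra.
    + apply ex_RInt_sub with a b; auto; lra.
Qed.

Section Up.
Variable r : R.
Hypothesis Hr : exp 40 <= r.
Local Notation L := (ln r).
Local Notation y := (1 / r ^ 2).
Local Notation th := (t_hat Hex r).
Local Notation sh := (s_hat Hex r).
Local Notation K := (K_H Hex r).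

Lemma lny : ln y = - (2 * L).
Proof. idtac. rewrite (yE' r Hr). apply ln_exp. Qed.

Lemma K_le_inv n t : e1 n = 1 -> inI n t -> th <= t -> t < 1 -> K t <= / (t - pp (S n)).
Proof.
  intros He Hn Hth Ht1. destruct Hn as [Hn1 Hn2].
  rewrite (K_hi r t) by lra. idtac.
  rewrite (hex1_block n t) by (split; lra). rewrite He.
  destruct (sh_AB r Hr t ltac:(lra)) as [HA [HB [HAB _]]]. idtac.
  destruct (sh_spec r Hr t ltac:(lra)) as [Hs HD]. idtac.
  assert (Hsp : sh t <= pp (S n)).
  { destruct (Rle_dec (sh t) (pp (S n))) as [|Hn]; auto. exfalso.
    rewrite (Dd_block n (sh t) t) in HD by lra. pose proof (ypos' r Hr). lra. }
  assert (F1 t - F1 (pp (S n)) = t - pp (S n)) by (rewrite (F1_block n) by lra; rewrite He; ring).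
  pose proof (F1_mono (sh t) (pp (S n)) Hsp).
  unfold Rdiv. rewrite Rmult_1_l. apply Rinv_le_contravar; lra.
Qed.

Lemma up_piece n : RInt K (Rmax th (pp (S n))) (Rmax th (pp n)) <= 1 + 2 * L.
Proof.
  pose proof (pp_lt n). pose proof (pp_le1 n). pose proof (pp_pos (S n)). pose proof (LE' r Hr).
  destruct (th_spec r Hr) as [Hth _]. idtac.
  destruct (Rle_dec (pp n) th) as [Hle|Hle].
  - rewrite !Rmax_left by lra. rewrite RInt_point_R. lra.
  - rewrite (Rmax_right th (pp n)) by lra.
    set (a := Rmax th (pp (S n))).
    assert (Ha1 : th <= a) by apply Rmax_l. assert (Ha2 : pp (S n) <= a) by apply Rmax_r.
    assert (Ha3 : a <= pp n) by (apply Rmax_lub; lra).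
    assert (Hex : ex_RInt K a (pp n)) by (apply (K_int r Hr); lra).
    destruct (e1_bounds n) as [He|He].
    + rewrite (RInt_const_ext K a (pp n) 0).
      * lra.
      * intros x Hx. rewrite Rmin_left in Hx by lra. rewrite Rmax_right in Hx by lra.
        apply (K_odd r Hr n x); [unfold inI; lra|exact He].
    + replace (1 + 2 * L) with (1 - ln y) by (rewrite lny; ring).
      apply piece_up with (pp (S n)).
      * apply (ypos' r Hr).
      * rewrite (yE' r Hr). rewrite <- exp_0. left. apply exp_increasing. lra.
      * lra.
      * lra.
      * pose proof (pp_pos (S n)). lra.
      * exact Hex.
      * intros t Ht. apply (K_bounds r Hr t). lra.
      * intros t Ht. apply K_le_inv; auto; [unfold inI; lra|lra|lra].
Qed.

Lemma up_chain n : RInt K (Rmax th (pp n)) 1 <= INR n * (1 + 2 * L).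
Proof.
  destruct (th_spec r Hr) as [Hth _]. idtac. pose proof (LE' r Hr).
  induction n as [|n IH].
  - rewrite pp_0. rewrite Rmax_right by lra. rewrite RInt_point_R. change (INR 0) with 0. lra.
  - rewrite <- (RInt_Chasles_R K _ (Rmax th (pp n)) 1).
    + pose proof (up_piece n). rewrite S_INR. lra.
    + pose proof (pp_lt n). pose proof (pp_le1 n). apply (K_int r Hr).
      * apply Rle_trans with th; [lra|apply Rmax_l].
      * apply Rmax_lub; [apply Rmax_l|]. eapply Rle_trans; [left; exact H0|apply Rmax_r].
      * apply Rmax_lub; lra.
    + pose proof (pp_le1 n). apply (K_int r Hr).
      * apply Rle_trans with th; [lra|apply Rmax_l].
      * apply Rmax_lub; lra.
      * lra.
Qed.

Lemma exp6_le : exp 6 <= 729.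
Proof.
  replace 6 with (1+1+1+1+1+1) by ring. rewrite !exp_plus. pose proof exp_le_3. pose proof (exp_pos 1).
  assert (exp 1 * exp 1 <= 9) by nra. assert (exp 1 * exp 1 * exp 1 <= 27) by nra.
  assert (exp 1 * exp 1 * exp 1 * exp 1 <= 81) by nra.
  assert (exp 1 * exp 1 * exp 1 * exp 1 * exp 1 <= 243) by nra. nra.
Qed.

Lemma K_upper : RInt K 0 1 <= 4 * L ^ 2.
Proof.
  destruct (th_spec r Hr) as [Hth _]. idtac. pose proof (LE' r Hr).
  destruct (th_bounds r Hr) as [Htl Htu]. idtac.
  rewrite <- (RInt_Chasles_R K 0 th 1) by (apply (K_int r Hr); lra).
  assert (H1 : RInt K 0 th <= exp 6).
  { apply Rle_trans with (RInt (fun _ => / y * th) 0 th).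
    - apply RInt_le; [lra|apply (K_int r Hr); lra|apply ex_RInt_const|].
      intros x Hx. rewrite (K_lo r x) by lra. idtac.
      pose proof (F2_mono 0 x ltac:(lra)). rewrite F2_0 in H0. pose proof (hex1_bounds x).
      pose proof (ypos' r Hr). idtac. assert (0 < / y) by (apply Rinv_0_lt_compat; lra).
      rewrite Rmult_assoc. apply Rmult_le_compat_l; [lra|].
      apply Rle_trans with (x * 1); [apply Rmult_le_compat; lra|lra].
    - rewrite RInt_const_R. idtac. rewrite (yE' r Hr). idtac. rewrite <- exp_Ropp, Ropp_involutive.
      apply Rle_trans with (exp (2 * L) * (exp (3 - L) * exp (3 - L))).
      + rewrite Rminus_0_r, Rmult_assoc. pose proof (exp_pos (2 * L)). apply Rmult_le_compat_l; [lra|].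
        apply Rmult_le_compat; lra.
      + rewrite <- !exp_plus. right. f_equal. ring. }
  pose proof exp6_le as E6.
  destruct (lev_spec th ltac:(lra)) as [HN1 HN2].
  pose proof (lev_le_ln th ltac:(lra)) as Hl1.
  assert (Hl2 : ln th >= - L) by (rewrite <- (ln_exp (-L)); apply Rle_ge; apply ln_le; [apply exp_pos|exact Htl]).
  pose proof (up_chain (S (lev th))) as Hc. rewrite Rmax_left in Hc by lra.
  rewrite S_INR in Hc.
  assert (Hl3 : INR (lev th) + 1 <= L + 1) by lra.
  assert (Hc2 : RInt K th 1 <= (L + 1) * (1 + 2 * L)).
  { eapply Rle_trans; [exact Hc|]. apply Rmult_le_compat_r; lra. }
  nra.
Qed.
End Up.


Section Low.
Variable r : R.
Hypothesis Hr : exp 40 <= r.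
Local Notation L := (ln r).
Local Notation y := (1 / r ^ 2).
Local Notation th := (t_hat Hex r).
Local Notation sh := (s_hat Hex r).
Local Notation K := (K_H Hex r).

Lemma e1_even m : e1 (2 * m) = 1.
Proof. unfold e1. rewrite even_2k. reflexivity. Qed.

Lemma K_nonneg a b : 0 <= a -> a <= b -> b <= 1 -> 0 <= RInt K a b.
Proof.
  intros. apply RInt_ge_0; auto. apply (K_int r Hr); lra.
  intros x Hx. apply (K_bounds r Hr x). lra.
Qed.

Lemma low_piece m : 4 * INR m + 5 < 2 * L ->
  let n := (2 * m)%nat in
  let p1 := pp (S n) in let p2 := pp (S (S n)) in
  let a := p1 + y / (p1 - p2) in
  p2 <= a /\ a < pp n /\ 2 * L - 4 * INR m - 3 <= RInt K a (pp n).
Proof.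
  intros Hm n p1 p2 a.
  pose proof (yE' r Hr) as Ey. pose proof (ypos' r Hr) as Hy.
  pose proof (pp_lt n) as Hn0. pose proof (pp_lt (S n)) as Hn1. pose proof (pp_lt (S (S n))) as Hn2.
  pose proof (pp_le1 n) as Hn3. pose proof (pp_pos (S (S (S n)))) as Hn4.
  pose proof (ell_ge n) as El0. pose proof (ell_ge (S n)) as El1. pose proof (ell_ge (S (S n))) as El2.
  fold p1 p2 in Hn0, Hn1, Hn2, El0, El1, El2.
  assert (Hp1p2 : p1 * p2 = exp (- (4 * INR m + 3))).
  { unfold p1, p2, pp. rewrite <- exp_plus. f_equal. unfold n. rewrite !S_INR, mult_INR. simpl. ring. }
  assert (Hp2p3 : p2 * pp (S (S (S n))) = exp (- (4 * INR m + 5))).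
  { unfold p2, pp. rewrite <- exp_plus. f_equal. unfold n. rewrite !S_INR, mult_INR. simpl. ring. }
  assert (Hy1 : y < p1 * p2) by (rewrite Hp1p2, Ey; apply exp_increasing; lra).
  assert (Hy2 : y < p2 * pp (S (S (S n)))) by (rewrite Hp2p3, Ey; apply exp_increasing; lra).
  assert (Hl1 : 0 < p1 - p2) by lra.
  assert (Hu0 : 0 < y / (p1 - p2)) by (apply Rdiv_lt_0_compat; lra).
  assert (Hu1 : y / (p1 - p2) < pp n - p1).
  { apply Rmult_lt_reg_r with (p1 - p2); [lra|]. unfold Rdiv. rewrite Rmult_assoc, Rinv_l by lra.
    rewrite Rmult_1_r. apply Rlt_le_trans with (p1 * p2); [lra|]. apply Rmult_le_compat; lra. }
  destruct (th_spec r Hr) as [Hth HDth].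
  assert (Hthp1 : th <= p1).
  { destruct (Rle_dec th p1) as [|Hn]; auto. exfalso.
    assert (Dd 0 p1 <= Dd 0 th) by (apply Dd_mono; lra).
    assert (Dd (pp (S (S (S n)))) p1 <= Dd 0 p1) by (apply Dd_mono; lra).
    rewrite (Dd_two (S n)) in H0 by (fold p1 p2; lra). fold p1 p2 in H0.
    assert (p2 * pp (S (S (S n))) <= (p1 - p2) * (p2 - pp (S (S (S n))))) by (apply Rmult_le_compat; lra).
    clear - H H0 H1 HDth Hy2. nra. }
  split; [unfold a; lra|]. split; [unfold a; lra|].
  assert (Hin : ex_RInt K a (pp n)) by (apply (K_int r Hr); unfold a; lra).
  destruct (RInt_inv p1 a (pp n) ltac:(unfold a; lra) ltac:(unfold a; lra)) as [Hie Hiv].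
  apply Rle_trans with (RInt (fun t => / (t - p1)) a (pp n)).
  - rewrite Hiv. unfold a. replace (p1 + y / (p1 - p2) - p1) with (y / (p1 - p2)) by ring.
    assert (Hld : ln (y / (p1 - p2)) = ln y - ln (p1 - p2)).
    { unfold Rdiv at 1. rewrite ln_mult by (try apply Rinv_0_lt_compat; lra). rewrite ln_Rinv by lra. ring. }
    rewrite Hld, Ey, ln_exp.
    assert (ln p1 + ln p2 <= ln (pp n - p1) + ln (p1 - p2)).
    { rewrite <- !ln_mult by lra. apply ln_le; [apply Rmult_lt_0_compat; lra|].
      apply Rmult_le_compat; lra. }
    rewrite <- ln_mult in H by lra. rewrite Hp1p2, ln_exp in H. lra.
  - apply RInt_le; [unfold a; lra|exact Hie|exact Hin|].
    intros t Ht. assert (Ht' : th <= t < 1) by (unfold a in Ht; lra).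
    rewrite (K_hi r t Ht'). rewrite (hex1_block n t) by (unfold inI, a in *; fold p1; lra).
    unfold n. rewrite e1_even. fold n.
    destruct (sh_AB r Hr t ltac:(lra)) as [HA _].
    destruct (sh_spec r Hr t ltac:(lra)) as [Hs HD].
    assert (Hsp : p2 <= sh t).
    { destruct (Rle_dec p2 (sh t)) as [|Hn]; auto. exfalso.
      assert (Dd p2 t <= Dd (sh t) t) by (apply Dd_mono; unfold a in *; lra).
      rewrite (Dd_two n p2 t) in H by (fold p1 p2; unfold a in *; lra). fold p1 in H.
      assert (y / (p1 - p2) * (p1 - p2) < (t - p1) * (p1 - p2)).
      { apply Rmult_lt_compat_r; unfold a in *; lra. }
      unfold Rdiv in H0. rewrite Rmult_assoc, Rinv_l, Rmult_1_r in H0 by lra. lra. }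
    assert (E : F1 t - F1 p2 = t - p1).
    { replace (F1 t - F1 p2) with ((F1 t - F1 p1) + (F1 p1 - F1 p2)) by ring.
      unfold p1, p2. rewrite (F1_block n), (F1_block (S n)) by (fold p1 p2; unfold a in *; lra).
      rewrite e1_S. unfold n. rewrite e1_even. fold n. fold p1. ring. }
    pose proof (F1_mono p2 (sh t) Hsp).
    unfold Rdiv. rewrite Rmult_1_l. apply Rinv_le_contravar; lra.
Qed.

Lemma low_chain m : 4 * INR m + 1 < 2 * L ->
  INR m * (2 * L - 3) - 2 * INR m * (INR m - 1) <= RInt K (pp (2 * m)) 1.
Proof.
  induction m as [|m IH]; intros Hm.
  - simpl. rewrite pp_0, RInt_point_R. lra.
  - rewrite S_INR in Hm. specialize (IH ltac:(lra)).
    destruct (low_piece m ltac:(lra)) as [Ha1 [Ha2 Hpiece]].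
    set (a := pp (S (2 * m)) + 1 / r ^ 2 / (pp (S (2 * m)) - pp (S (S (2 * m))))) in *.
    replace (2 * S m)%nat with (S (S (2 * m))) by lia.
    pose proof (pp_le1 (2 * m)). pose proof (pp_pos (S (S (2 * m)))).
    rewrite <- (RInt_Chasles_R K _ a 1).
    + rewrite <- (RInt_Chasles_R K a (pp (2 * m)) 1).
      * pose proof (K_nonneg (pp (S (S (2 * m)))) a ltac:(lra) ltac:(lra) ltac:(lra)).
        rewrite S_INR. nra.
      * apply (K_int r Hr); lra.
      * apply (K_int r Hr); lra.
    + apply (K_int r Hr); lra.
    + apply (K_int r Hr); lra.
Qed.

Lemma K_lower : L ^ 2 / 8 <= RInt K 0 1.
Proof.
  pose proof (LE' r Hr).
  destruct (nat_floor (L / 4) ltac:(lra)) as [M [HM1 HM2]].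
  pose proof (low_chain M ltac:(lra)).
  pose proof (pp_le1 (2 * M)). pose proof (pp_pos (2 * M)).
  rewrite <- (RInt_Chasles_R K 0 (pp (2 * M)) 1) by (apply (K_int r Hr); lra).
  pose proof (K_nonneg 0 (pp (2 * M)) ltac:(lra) ltac:(lra) ltac:(lra)).
  assert (HM3 : L / 4 - 1 <= INR M) by lra.
  assert (INR M * (2 * L - 3) - 2 * INR M * (INR M - 1) >= INR M * (3 / 2 * L - 1)) by nra.
  assert (INR M * (3 / 2 * L - 1) >= (L / 4 - 1) * (3 / 2 * L - 1)) by nra.
  nra.
Qed.
End Low.


Theorem proposition7p5 :
  (exists c1 c2 R1 : R, 0 < c1 /\ 0 < c2 /\
     forall r : R, r0 Hex < r -> R1 < r ->
       c1 * ln r <= INR (kappa_H Hex r) <= c2 * ln r) /\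
  (exists c1 c2 R1 : R, 0 < c1 /\ 0 < c2 /\
     forall r : R, r0 Hex < r -> R1 < r ->
       c1 * (ln r) ^ 2 <= RInt (fun t => K_H Hex r t) 0 1 <= c2 * (ln r) ^ 2).
Proof.
  split.
  - exists (1/4), 2, (exp 40). split; [lra|]. split; [lra|].
    intros r _ Hr. assert (Hr' : exp 40 <= r) by lra.
    assert (Hk : kappa_spec Hex r (kappa_H Hex r)).
    { unfold kappa_H, the_nat. apply epsilon_spec. apply (kappa_ex r Hr'). }
    pose proof (kappa_lower r Hr' _ Hk). pose proof (kappa_upper r Hr' _ Hk). lra.
  - exists (1/8), 4, (exp 40). split; [lra|]. split; [lra|].
    intros r _ Hr. assert (Hr' : exp 40 <= r) by lra.
    pose proof (K_lower r Hr'). pose proof (K_upper r Hr'). change (fun t => K_H Hex r t) with (K_H Hex r). lra.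
Qed.
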